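(* Fix integers $n,N,k\geq1$, let $V=\mathbb{C}[z_0,\ldots,z_n]_k^{\oplus(N+1)}$, and let $V^{(1)}\subset V$ be the set of tuples $\psi=(\psi_0,\ldots,\psi_N)$ whose components do not simultaneously vanish on any codimension-one subvariety of $\mathbb{P}^n$, each defining a rational map $\psi:\mathbb{P}^n\dashrightarrow\mathbb{P}^N$. Let $V^{(2)}\subset V^{(1)}$ be the subset of $\psi$ such that $\psi$ is an immersion at a generic point of $\mathbb{P}^n$. Then $V^{(2)}$ is Zariski open in $V^{(1)}$. *)

(* Defs.v *)
From HB Require Import structures.
From mathcomp Require Import all_boot all_algebra.
From mathcomp Require Import complex.
From mathcomp Require Import Rstruct.
From mathcomp Require Import mpoly.
Set Implicit Arguments. Unset Strict Implicit. Unset Printing Implicit Defensive.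
Import GRing.Theory.
Local Open Scope ring_scope.

Definition C : closedFieldType := complex Rdefinitions.R.

(* A point of the affine cone C^{n+1} over P^n (homogeneous coordinates z_0..z_n). *)
Definition cpoint (n : nat) := 'I_n.+1 -> C.

Definition ptuple (n N : nat) := 'I_N.+1 -> {mpoly C[n.+1]}.

Definition inV (n N k : nat) (psi : ptuple n N) : Prop :=
  forall i, psi i \is k.-homog.

(* A hypersurface (codimension-one subvariety) of P^n is the zero locus of a
   nonconstant homogeneous polynomial h. *)
Definition nonconst_homog (n : nat) (h : {mpoly C[n.+1]}) : Prop :=
  h != 0 /\ exists d : nat, (0 < d)%N /\ h \is d.-homog.

Definition vanish_on (n N : nat) (psi : ptuple n N) (h : {mpoly C[n.+1]}) : Prop :=
  forall z : cpoint n, h.@[z] = 0 -> forall i, (psi i).@[z] = 0.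

Definition inV1 (n N k : nat) (psi : ptuple n N) : Prop :=
  inV k psi /\ ~ (exists h, nonconst_homog h /\ vanish_on psi h).

(* Immersion of [psi] : P^n --> P^N at the point [z]:
   psi is defined at [z] (some psi_i(z) <> 0) and the differential
   T_[z]P^n = C^{n+1}/Cz  -->  T_[psi z]P^N = C^{N+1}/C psi(z),
   v |-> J(z) v  (J = Jacobian matrix (d psi_i / d z_j)), is injective. *)
Definition immersion_at (n N : nat) (psi : ptuple n N) (z : cpoint n) : Prop :=
  (exists i, (psi i).@[z] != 0) /\
  forall v : cpoint n,
    (exists c : C, forall i,
        \sum_(j < n.+1) ((psi i)^`M(j)).@[z] * v j = c * (psi i).@[z]) ->
    exists a : C, forall j, v j = a * z j.

(* psi is an immersion at a generic point of P^n: the immersion locus contains a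
   nonempty Zariski open subset (the nonvanishing locus of a nonzero polynomial). *)
Definition generic_immersion (n N : nat) (psi : ptuple n N) : Prop :=
  exists g : {mpoly C[n.+1]}, g != 0 /\
    forall z : cpoint n, g.@[z] != 0 -> immersion_at psi z.

Definition inV2 (n N k : nat) (psi : ptuple n N) : Prop :=
  inV1 k psi /\ generic_immersion psi.

(* Polynomial (regular) functions on V: polynomials in finitely many of the
   coefficients of the components psi_i. *)
Definition poly_fun (n N : nat) (f : ptuple n N -> C) : Prop :=
  exists (m : nat) (idx : 'I_m -> 'I_N.+1 * 'X_{1..n.+1}) (P : {mpoly C[m]}),
    forall psi, f psi = P.@[fun j => (psi (idx j).1)@_(idx j).2].

(* B is Zariski open in A (subspace topology): B /\ A = A minus the common
   zero set of some family of polynomial functions. *)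
Definition zariski_open_in (n N : nat) (A B : ptuple n N -> Prop) : Prop :=
  exists (I : Type) (F : I -> ptuple n N -> C),
    (forall i, poly_fun (F i)) /\
    forall psi, A psi -> (B psi <-> exists i, F i psi != 0).

(* Main.v *)
Require Import Defs.
From HB Require Import structures.
From mathcomp Require Import all_boot all_algebra.
From mathcomp Require Import complex.
From mathcomp Require Import Rstruct.
From mathcomp Require Import mpoly.
Set Implicit Arguments. Unset Strict Implicit. Unset Printing Implicit Defensive.
Import GRing.Theory.
Local Open Scope ring_scope.

Lemma enc_inj D n (f g : 'I_n -> nat) : (forall i, f i < D)%N -> (forall i, g i < D)%N ->
  (\sum_(i < n) f i * D ^ i = \sum_(i < n) g i * D ^ i)%N -> forall i, f i = g i.
Proof.
elim: n f g => [|n IH] f g hf hg; first by move=> _ [].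
rewrite !big_ord_recl /= !expn0 !muln1.
have e h : (\sum_(i < n) h (lift ord0 i) * D ^ (lift ord0 i))%N = (D * \sum_(i < n) h (lift ord0 i) * D ^ i)%N.
  rewrite big_distrr /=; apply: eq_bigr => i _. by rewrite /= expnS mulnCA.
rewrite !e => E.
have D0 : (0 < D)%N by apply: leq_ltn_trans (hf ord0).
have E0 : f ord0 = g ord0.
  by move: (congr1 (modn^~ D) E); rewrite addnC [in X in _ = X -> _]addnC !(mulnC D) !modnMDl !modn_small.
move: E; rewrite E0 => /addnI /eqP; rewrite eqn_mul2l eqn0Ngt D0 /= => /eqP E.
have := IH (fun i => f (lift ord0 i)) (fun i => g (lift ord0 i)) (fun i => hf _) (fun i => hg _) E.
move=> H i; case: (unliftP ord0 i) => [j ->|->] //; exact: H.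
Qed.

Lemma mpoly_nonvanish n (p : {mpoly C[n]}) : p != 0 -> exists z : 'I_n -> C, p.@[z] != 0.
Proof.
move=> p0.
pose D := msize p.
pose enc (m : 'X_{1..n}) := (\sum_(i < n) m i * D ^ i)%N.
pose Q : {poly C} := \sum_(m <- msupp p) p@_m *: 'X^(enc m).
have hQ t : Q.[t] = p.@[fun i => t ^+ (D ^ i)].
  rewrite mevalE horner_sum; apply: eq_bigr => m _.
  rewrite hornerZ hornerXn; congr (_ * _).
  rewrite (eq_bigr (fun i => t ^+ (m i * D ^ i))); first by rewrite prodrXr.
  by move=> i _; rewrite -exprM mulnC.
have ltD m : m \in msupp p -> forall i, (m i < D)%N.
  move=> hm i; apply: leq_ltn_trans (msize_mdeg_lt hm).
  by rewrite mdegE (bigD1 i) //= leq_addr.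
have [m0 hm0] : exists m0, m0 \in msupp p.
  case E: (msupp p) => [|m0 s]; last by exists m0; rewrite inE eqxx.
  by move: p0; rewrite -msupp_eq0 E.
have Q0 : Q != 0.
  apply/eqP => /(congr1 (fun q : {poly C} => q`_(enc m0))).
  rewrite coef0 coef_sum (big_rem m0) //= coefZ coefXn eqxx mulr1.
  rewrite big1_seq ?addr0; first by apply/eqP; rewrite -mcoeff_msupp.
  move=> m /andP [_]; rewrite mem_rem_uniq ?msupp_uniq // inE => /andP [nm hm].
  rewrite coefZ coefXn; case: eqP => [E|]; last by rewrite mulr0.
  exfalso; move/negP: nm; apply; apply/eqP/mnmP => i.
  by have := @enc_inj D n (fun i => m0 i) (fun i => m i) (ltD _ hm0) (ltD _ hm) E.
pose rs := [seq (i%:R : C) | i <- iota 0 (size Q)].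
case: (boolP (has (fun t => Q.[t] != 0) rs)) => [/hasP [t _ ht]|/hasPn H].
  by exists (fun i => t ^+ (D ^ i)); rewrite -hQ.
exfalso; suff: (size rs < size Q)%N by rewrite size_map size_iota ltnn.
apply: max_poly_roots Q0 _ _.
  by apply/allP => t /H; rewrite negbK.
rewrite map_inj_uniq ?iota_uniq // => a b /eqP.
by rewrite /C Num.Theory.eqr_nat => /eqP.
Qed.

Lemma euler n k (p : {mpoly C[n]}) (z : 'I_n -> C) : p \is k.-homog ->
  \sum_(j < n) (p^`M(j)).@[z] * z j = k%:R * p.@[z].
Proof.
move=> hp.
have E j : (p^`M(j)).@[z] = \sum_(m <- msupp p) p@_m * ((m j)%:R * ('X_[m - U_(j)]).@[z]).
  transitivity (((\sum_(m <- msupp p) p@_m *: 'X_[m])^`M(j)).@[z]); first by rewrite -mpolyE.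
  rewrite (raddf_sum (mderiv j)) raddf_sum /=; apply: eq_bigr => m _.
  by rewrite mderivZ mevalZ mderivX mevalZ.
rewrite (eq_bigr _ (fun j _ => congr1 (fun x => x * z j) (E j))) /=.
rewrite (eq_bigr _ (fun j _ => big_distrl _ _ _)) /= exchange_big /=.
transitivity (k%:R * (\sum_(m <- msupp p) p@_m *: 'X_[m]).@[z]); last by rewrite -mpolyE.
rewrite raddf_sum big_distrr /=; apply: eq_big_seq => m hm.
rewrite mevalZ; under eq_bigr => i _ do rewrite -mulrA.
rewrite -big_distrr /= [RHS]mulrCA; congr (_ * _).
have -> : \sum_(j < n) (m j)%:R * ('X_[m - U_(j)]).@[z] * z j = \sum_(j < n) (m j)%:R * ('X_[m]).@[z].
  apply: eq_bigr => j _; rewrite -mulrA.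
  case: (posnP (m j)) => [->|mj]; first by rewrite !mul0r.
  congr (_ * _).
  have le : (U_(j) <= m)%MM.
    by apply/mnm_lepP => i; rewrite mnm1E; case: eqP => [<-|]; rewrite ?mj.
  by rewrite -{2}(submK le) mpolyXD mevalM mevalXU.
rewrite -big_distrl /= -natr_sum -mdegE (dhomog_mf hp hm) //.
Qed.

Lemma inj_det (F : fieldType) m r (J : 'M[F]_(m, r)) :
  (forall v : 'cV_r, J *m v = 0 -> v = 0) -> exists W : 'M_(r, m), \det (W *m J) != 0.
Proof.
move=> H.
have rf : row_free J^T.
  rewrite -kermx_eq0; apply/negPn/negP => /eqP nz.
  suff /existsP [i ni] : [exists i, row i (kermx J^T) != 0].
    have : (row i (kermx J^T) <= kermx J^T)%MS by exact: row_sub.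
    rewrite sub_kermx => /eqP E.
    move/negP: ni; apply; apply/eqP; apply: trmx_inj; rewrite trmx0; apply: H.
    by have := congr1 trmx E; rewrite trmx_mul trmxK trmx0.
  case: (boolP [exists i, row i (kermx J^T) != 0]) => // /existsPn A; exfalso.
  apply: nz; apply/matrixP => i j; have := A i; rewrite negbK => /eqP/matrixP/(_ 0 j).
  by rewrite !mxE.
have : row_full J.
  move: rf. rewrite /row_free. rewrite /row_full. rewrite mxrank_tr. done.
case/row_fullP => W hW; exists W; by rewrite hW det1 oner_neq0.
Qed.

Lemma det_inj (F : fieldType) m r (W : 'M[F]_(r, m)) (J : 'M[F]_(m, r)) :
  \det (W *m J) != 0 -> forall v : 'cV_r, J *m v = 0 -> v = 0.
Proof.
move=> d v Jv.
have U : W *m J \in unitmx by rewrite unitmxE unitfE.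
by rewrite -(mulKmx U v) -mulmxA Jv !mulmx0.
Qed.

Lemma mevalZC n (z : 'I_n -> C) c (p : {mpoly C[n]}) : (c *: p).@[z] = c * p.@[z].
Proof. exact: mevalZ. Qed.

Definition Jm n N (psi : ptuple n N) (z : cpoint n) : 'M[C]_(N.+1, n.+1) :=
  \matrix_(a, b) ((psi a)^`M(b)).@[z].

Definition Gp n N (psi : ptuple n N) (W : 'M[C]_(n.+1, N.+1)) (i : 'I_N.+1) : {mpoly C[n.+1]} :=
  \det (\matrix_(a, b) \sum_(a' < N.+1) W a a' *: (psi a')^`M(b)) * psi i.

Lemma Gp_eval n N (psi : ptuple n N) W i z :
  (Gp psi W i).@[z] = \det (W *m Jm psi z) * (psi i).@[z].
Proof.
rewrite /Gp mevalM -(det_map_mx (meval z)); congr (\det _ * _).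
apply/matrixP => a b; rewrite !mxE raddf_sum /=; apply: eq_bigr => a' _.
by rewrite /Jm mxE; apply: mevalZ.
Qed.

Lemma msize_homog n k (p : {mpoly C[n]}) : p \is k.-homog -> (msize p <= k.+1)%N.
Proof.
move=> hp; rewrite msizeE; apply/bigmax_leqP_seq => m hm _.
by rewrite (dhomog_mf hp hm).
Qed.

Lemma expand_eval n k (p : {mpoly C[n]}) z : p \is k.-homog ->
  p.@[z] = \sum_(m : 'X_{1..n < k.+1}) p@_m * ('X_[m]).@[z].
Proof.
move=> hp; rewrite {1}(mpolywE (msize_homog hp)) raddf_sum /=; apply: eq_bigr => m _.
by rewrite mevalZC.
Qed.

Lemma expand_deriv n k (p : {mpoly C[n]}) z b : p \is k.-homog ->
  (p^`M(b)).@[z] = \sum_(m : 'X_{1..n < k.+1}) p@_m * (('X_[m])^`M(b)).@[z].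
Proof.
move=> hp; rewrite {1}(mpolywE (msize_homog hp)) (raddf_sum (mderiv b)) raddf_sum /=.
by apply: eq_bigr => m _; rewrite mderivZ mevalZC.
Qed.

Section Coef.
Variables (n N k : nat).
Definition TT := ('I_N.+1 * 'X_{1..n.+1 < k.+1})%type.
Definition MM := #|{: TT}|.
Definition idx (j : 'I_MM) : 'I_N.+1 * 'X_{1..n.+1} :=
  ((enum_val j).1, val (enum_val j).2).

Definition Pol (z : cpoint n) (W : 'M[C]_(n.+1, N.+1)) (i : 'I_N.+1) : {mpoly C[MM]} :=
  \det (\matrix_(a, b) \sum_(j < MM)
          (W a (idx j).1 * (('X_[(idx j).2])^`M(b)).@[z]) *: 'X_j)
  * \sum_(j < MM) (((idx j).1 == i)%:R * ('X_[(idx j).2]).@[z]) *: 'X_j.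

Lemma sumT (f : 'I_N.+1 -> 'X_{1..n.+1} -> C) :
  \sum_(a < N.+1) \sum_(m : 'X_{1..n.+1 < k.+1}) f a (val m)
  = \sum_(j < MM) f (idx j).1 (idx j).2.
Proof.
rewrite pair_big /=.
by rewrite (big_enum_val (A := predT) (fun t : TT => f t.1 (val t.2))).
Qed.

Lemma Pol_eval (psi : ptuple n N) z W i : inV k psi ->
  (Pol z W i).@[fun j => (psi (idx j).1)@_(idx j).2]
  = \det (W *m Jm psi z) * (psi i).@[z].
Proof.
move=> hpsi; rewrite /Pol mevalM -(det_map_mx (meval _)); congr (\det _ * _).
  apply/matrixP => a b; rewrite !mxE raddf_sum /=.
  transitivity (\sum_(a' < N.+1) \sum_(m : 'X_{1..n.+1 < k.+1})
      W a a' * (psi a')@_(val m) * (('X_[val m])^`M(b)).@[z]).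
    rewrite (sumT (fun a' m => W a a' * (psi a')@_m * (('X_[m])^`M(b)).@[z])).
    apply: eq_bigr => j _; by rewrite mevalZC mevalXU mulrAC.
  apply: eq_bigr => a' _; rewrite !mxE (expand_deriv _ _ (hpsi a')) big_distrr.
  by apply: eq_bigr => m _; rewrite /= mulrA.
rewrite raddf_sum /=.
transitivity (\sum_(a' < N.+1) \sum_(m : 'X_{1..n.+1 < k.+1})
      (a' == i)%:R * (psi a')@_(val m) * (('X_[val m])).@[z]).
  rewrite (sumT (fun a' m => (a' == i)%:R * (psi a')@_m * ('X_[m]).@[z])).
  apply: eq_bigr => j _; by rewrite mevalZC mevalXU mulrAC.
rewrite (bigD1 i) //= [X in _ + X]big1 ?addr0.
  rewrite (expand_eval _ (hpsi i)); apply: eq_bigr => m _; by rewrite eqxx mul1r.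
move=> a' /negbTE ->; apply: big1 => m _; by rewrite !mul0r.
Qed.
End Coef.

Lemma natC_neq0 k : (k.+1%:R : C) != 0.
Proof. rewrite /C. by rewrite Num.Theory.pnatr_eq0. Qed.

Lemma Jm_col n N (psi : ptuple n N) z (v : cpoint n) a :
  (Jm psi z *m \col_j v j) a 0 = \sum_(j < n.+1) ((psi a)^`M(j)).@[z] * v j.
Proof. rewrite !mxE; apply: eq_bigr => j _; by rewrite !mxE. Qed.

Lemma immersionP n N k (psi : ptuple n N) z : inV k.+1 psi ->
  immersion_at psi z <->
  (exists i, (psi i).@[z] != 0) /\ (forall v : 'cV_n.+1, Jm psi z *m v = 0 -> v = 0).
Proof.
move=> hpsi; split.
  case=> [[i0 hi0] H]; split; first by exists i0.
  move=> v Jv.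
  have [al hal] : exists al : C, forall j, v j 0 = al * z j.
    apply: H; exists 0 => i; rewrite mul0r -(Jm_col psi z (fun j => v j 0)).
    have -> : \col_j v j 0 = v by apply/matrixP => j l; rewrite mxE ord1.
    by rewrite Jv mxE.
  have al0 : al = 0.
    have := Jm_col psi z (fun j => v j 0) i0.
    have -> : \col_j v j 0 = v by apply/matrixP => j l; rewrite mxE ord1.
    rewrite Jv mxE (eq_bigr (fun j => al * (((psi i0)^`M(j)).@[z] * z j))); last first.
      by move=> j _; rewrite hal mulrCA.
    rewrite -big_distrr /= (euler z (hpsi i0)).
    move/esym/eqP; rewrite !mulf_eq0 (negbTE (natC_neq0 k)) (negbTE hi0) orbF.
    by rewrite orbF => /eqP.
  by apply/matrixP => j l; rewrite ord1 hal al0 mul0r mxE.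
case=> [[i0 hi0] H]; split; first by exists i0.
move=> v [c hc].
exists (c / k.+1%:R) => j.
have E : \col_j (v j - c / k.+1%:R * z j) = 0 :> 'cV_n.+1.
  apply: H; apply/matrixP => a l; rewrite ord1 Jm_col mxE.
  rewrite (eq_bigr (fun j => ((psi a)^`M(j)).@[z] * v j - c / k.+1%:R * (((psi a)^`M(j)).@[z] * z j))); last first.
    by move=> j' _; rewrite mulrBr mulrCA.
  rewrite sumrB -big_distrr /= (euler z (hpsi a)) hc mulrA divfK ?natC_neq0 //.
  by rewrite subrr.
by move/matrixP: E => /(_ j 0); rewrite !mxE => /eqP; rewrite subr_eq0 => /eqP.
Qed.

Unset Implicit Arguments.

Theorem lemma9 (n N k : nat) (hn : (1 <= n)%N) (hN : (1 <= N)%N) (hk : (1 <= k)%N) :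
  zariski_open_in (@inV1 n N k) (@inV2 n N k).
Proof.
case: k hk => [//|k] _.
exists ((cpoint n * 'M[C]_(n.+1, N.+1)) * 'I_N.+1)%type.
exists (fun t psi => (Pol k.+1 t.1.1 t.1.2 t.2).@[fun j => (psi (idx j).1)@_(idx j).2]).
split.
  by move=> t; exists (MM n N k.+1), (@idx n N k.+1), (Pol k.+1 t.1.1 t.1.2 t.2).
move=> psi hA; have hV : inV k.+1 psi := hA.1.
split.
  case=> _ [g [g0 hg]].
  have [z hz] := mpoly_nonvanish g0.
  have /(immersionP z hV) [[i hi] Jinj] := hg z hz.
  have [W hW] := inj_det Jinj.
  exists ((z, W), i) => /=; rewrite Pol_eval //.
  by rewrite mulf_neq0.
case=> [[[z0 W] i]] /=; rewrite Pol_eval // => hF.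
split => //.
exists (Gp psi W i); split.
  apply/eqP => g0; move: hF; by rewrite -Gp_eval g0 meval0 eqxx.
move=> z; rewrite Gp_eval mulf_eq0 negb_or => /andP [hd hi].
apply/(immersionP z hV); split; first by exists i.
exact: det_inj hd.
Qed.
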